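(* If $\Gamma\vdash^{n_1} t(u,x.r)(u',y.r'):\sigma$ is derivable in $\cap J$ (with $x\notin\mathrm{fv}(u')\cup\mathrm{fv}(r')$), then there exist an environment $\Sigma\sqsubseteq\Gamma$ and $n_2\le n_1$ such that $\Sigma\vdash^{n_2} t(u,x.r(u',y.r')):\sigma$ is derivable in $\cap J$.
   Context: Terms $\mathtt T_J$: $t,u,r ::= x \mid \lambda x.t \mid t(u,y.r)$ ($y$ bound in $r$), up to $\alpha$-equivalence. System $\cap J$: types $\sigma,\tau ::= \alpha \mid \mathcal M\to\sigma$, $\mathcal M=[\sigma_i]_{i\in I}$ a finite possibly empty multiset; $\sqcup$ multiset union; environments map variables to multisets, $\wedge$ pointwise union, $\Gamma;x:\mathcal M$ extension with $x\notin\mathrm{dom}\,\Gamma$; $\Sigma\sqsubseteq\Gamma$ means $\Sigma(z)\subseteq\Gamma(z)$ (multiset inclusion) for every variable $z$. $\mathrm{ch}(\mathcal M)=\mathcal M$ if $\mathcal M\ne[\,]$, $\mathrm{ch}([\,])=[\tau]$ for an arbitrary $\tau$. Rules: (var) $x:[\sigma]\vdash x:\sigma$; (abs) from $\Gamma;x:\mathcal M\vdash t:\sigma$ infer $\Gamma\vdash\lambda x.t:\mathcal M\to\sigma$; (many) from $(\Gamma_i\vdash t:\sigma_i)_{i\in I}$, $I\ne\emptyset$, infer $\wedge_i\Gamma_i\vdash t:[\sigma_i]_{i\in I}$; (app) from $\Gamma\vdash t:\mathrm{ch}([\mathcal M_i\to\tau_i]_{i\in I})$, $\Delta\vdash u:\mathrm{ch}(\sqcup_i\mathcal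 M_i)$, $\Lambda;y:[\tau_i]_{i\in I}\vdash r:\sigma$ infer $\Gamma\wedge\Delta\wedge\Lambda\vdash t(u,y.r):\sigma$. $\vdash^n$ indicates a derivation of size $n$ = number of rule instances other than (many). *)

(* Defs.v *)
From Stdlib Require Import List Permutation Arith.
Import ListNotations.

(* JApp t u r  represents  t(u, y.r) ; r lives under one binder (y = index 0). *)
Inductive term : Type :=
| Var  : nat -> term
| Lam  : term -> term
| JApp : term -> term -> term -> term.

Fixpoint lift (k : nat) (t : term) : term :=
  match t with
  | Var n => Var (if k <=? n then S n else n)
  | Lam b => Lam (lift (S k) b)
  | JApp a b c => JApp (lift k a) (lift k b) (lift (S k) c)
  end.

(* sigma ::= alpha | M -> sigma, a multiset M being represented by a list,
   compared up to permutation wherever multisets are compared. *)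
Inductive ty : Type :=
| TAtom : nat -> ty
| TArr  : list ty -> ty -> ty.

Definition mset := list ty.

Definition msub (A B : mset) : Prop := exists C, Permutation B (A ++ C).

Definition env := nat -> mset.

Definition env_empty : env := fun _ => [].
Definition env_single (x : nat) (M : mset) : env :=
  fun z => if z =? x then M else [].
Definition env_union (G D : env) : env := fun z => G z ++ D z.
(* Γ ; x:M  with x the freshly bound variable (index 0) *)
Definition env_cons (M : mset) (G : env) : env :=
  fun z => match z with 0 => M | S z' => G z' end.
Definition env_tail (E : env) : env := fun z => E (S z).
Definition env_eq (G D : env) : Prop := forall z, Permutation (G z) (D z).
Definition env_sub (S G : env) : Prop := forall z, msub (S z) (G z).

(* der G t s n   :  G |-^n t : s   (n = number of rules other than (many))
   derm G t M n  :  G |-^n t : M   obtained by (many) with I nonempty     *)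
Inductive der : env -> term -> ty -> nat -> Prop :=
| d_var : forall G x s,
    env_eq G (env_single x [s]) ->
    der G (Var x) s 1
| d_abs : forall G E t M s n,
    der E t s n ->
    Permutation M (E 0) ->
    env_eq G (env_tail E) ->
    der G (Lam t) (TArr M s) (S n)
| d_app : forall G Gt Du E t u r s (l : list (mset * ty)) Mt Mu n1 n2 n3,
    (* ch([M_i -> tau_i]_{i in I}) *)
    (match l with
     | [] => exists tau, Mt = [tau]
     | _ => Mt = map (fun p => TArr (fst p) (snd p)) l
     end) ->
    derm Gt t Mt n1 ->
    (* ch(⊔_i M_i) *)
    (match concat (map fst l) with
     | [] => exists tau, Mu = [tau]
     | U => Permutation Mu U
     end) ->
    derm Du u Mu n2 ->
    (* Λ ; y:[tau_i]_{i in I} *)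
    der E r s n3 ->
    Permutation (E 0) (map snd l) ->
    env_eq G (env_union Gt (env_union Du (env_tail E))) ->
    der G (JApp t u r) s (S (n1 + n2 + n3))
with derm : env -> term -> mset -> nat -> Prop :=
| dm_one : forall G t s n,
    der G t s n -> derm G t [s] n
| dm_cons : forall G G1 D t s M n m,
    der G1 t s n -> derm D t M m ->
    env_eq G (env_union G1 D) ->
    derm G t (s :: M) (n + m).

(* Main.v *)
Require Import Defs.
From Stdlib Require Import List Permutation Arith Lia.
Import ListNotations.

Scheme der_mut := Induction for der Sort Prop
with derm_mut := Induction for derm Sort Prop.
Combined Scheme der_derm_mut from der_mut, derm_mut.

Lemma msub_perm A A' B B' : Permutation A A' -> Permutation B B' -> msub A B -> msub A' B'.
Proof.
  intros HA HB [C HC]. exists C.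
  rewrite <- HB, HC. apply Permutation_app_tail; exact HA.
Qed.

Lemma msub_of_perm A B : Permutation B A -> msub A B.
Proof. intros H. exists []. rewrite app_nil_r. exact H. Qed.

Lemma msub_refl A : msub A A.
Proof. apply msub_of_perm. apply Permutation_refl. Qed.

Lemma msub_app A B C D : msub A B -> msub C D -> msub (A ++ C) (B ++ D).
Proof.
  intros [X HX] [Y HY]. exists (X ++ Y).
  rewrite HX, HY.
  rewrite <- !app_assoc. apply Permutation_app_head.
  rewrite !app_assoc. apply Permutation_app_tail.
  apply Permutation_app_comm.
Qed.

Lemma msub_trans A B C : msub A B -> msub B C -> msub A C.
Proof.
  intros [X HX] [Y HY]. exists (X ++ Y).
  rewrite HY, HX. rewrite app_assoc. apply Permutation_refl.
Qed.

Lemma msub_appr A B : msub A (A ++ B).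
Proof. exists B. apply Permutation_refl. Qed.

Lemma msub_appl A B : msub A (B ++ A).
Proof. exists B. apply Permutation_app_comm. Qed.

Lemma perm_mid (a b c d : mset) : Permutation ((a++b)++(c++d)) ((a++c)++(b++d)).
Proof.
  rewrite <- !app_assoc. apply Permutation_app_head.
  apply Permutation_app_swap_app.
Qed.

Lemma env_eq_refl G : env_eq G G.
Proof. intro z; apply Permutation_refl. Qed.

Lemma env_eq_sym G D : env_eq G D -> env_eq D G.
Proof. intros H z; symmetry; apply H. Qed.

Lemma env_eq_trans G D F : env_eq G D -> env_eq D F -> env_eq G F.
Proof. intros H1 H2 z; etransitivity; [apply H1|apply H2]. Qed.

Lemma der_env_eq G G' t s n : der G t s n -> env_eq G' G -> der G' t s n.
Proof.
  intros H HE; destruct H.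
  - apply d_var. eapply env_eq_trans; eauto.
  - eapply d_abs; eauto. eapply env_eq_trans; eauto.
  - eapply d_app; eauto. eapply env_eq_trans; eauto.
Qed.

Lemma derm_env_eq G G' t M n : derm G t M n -> env_eq G' G -> derm G' t M n.
Proof.
  intros H HE; destruct H.
  - apply dm_one. eapply der_env_eq; eauto.
  - eapply dm_cons; eauto. eapply env_eq_trans; eauto.
Qed.

Lemma derm_app G1 G2 t M1 M2 n1 n2 :
  derm G1 t M1 n1 -> derm G2 t M2 n2 ->
  derm (env_union G1 G2) t (M1 ++ M2) (n1 + n2).
Proof.
  intros H; revert G2 M2 n2; induction H; intros G2 M2 n2 H2; simpl.
  - eapply dm_cons; eauto. apply env_eq_refl.
  - rewrite <- Nat.add_assoc. eapply dm_cons; eauto.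
    intro z. unfold env_union. rewrite (H1 z). unfold env_union.
    rewrite app_assoc. apply Permutation_refl.
Qed.

Definition env_ins (k : nat) (E : env) : env :=
  fun z => if z <? k then E z else if z =? k then [] else E (pred z).

Lemma ins_eq k G D : env_eq G D -> env_eq (env_ins k G) (env_ins k D).
Proof.
  intros H z. unfold env_ins.
  destruct (z <? k); [apply H|]. destruct (z =? k); [constructor|apply H].
Qed.

Lemma lift_der_all :
  (forall E t s n, der E t s n -> forall k, der (env_ins k E) (lift k t) s n) /\
  (forall E t M n, derm E t M n -> forall k, derm (env_ins k E) (lift k t) M n).
Proof.
  apply (der_derm_mut
    (fun E t s n _ => forall k, der (env_ins k E) (lift k t) s n)
    (fun E t M n _ => forall k, derm (env_ins k E) (lift k t) M n)).
  all: clear.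
  - intros G x s e k. simpl. apply d_var.
    intro z. unfold env_ins.
    assert (e1 := e z). assert (e2 := e (pred z)). unfold env_single in *.
    destruct (Nat.leb_spec k x); destruct (Nat.ltb_spec z k); destruct (Nat.eqb_spec z k);
    try (destruct (Nat.eqb_spec z (S x))); try (destruct (Nat.eqb_spec z x));
    destruct (Nat.eqb_spec (pred z) x);
    try (rewrite e1); try (rewrite e2); try apply Permutation_refl; try lia.
  - intros G E t M s n d IH p e k. simpl. eapply d_abs.
    + apply (IH (S k)).
    + unfold env_ins. simpl. exact p.
    + intro z. unfold env_ins, env_tail. assert (e1 := e z). assert (e2 := e (pred z)).
      unfold env_tail in *.
      destruct (Nat.ltb_spec z k); destruct (Nat.eqb_spec z k);
      destruct (Nat.ltb_spec (S z) (S k)); destruct (Nat.eqb_spec (S z) (S k));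
      try (rewrite e1); try (rewrite e2); try apply Permutation_refl; try lia.
      all: replace (S (pred z)) with z by lia; apply Permutation_refl.
  - intros G Gt Du E t u r s l Mt Mu n1 n2 n3 y d IHt y0 d0 IHu d1 IHr p e k.
    simpl. eapply d_app.
    + exact y.
    + apply (IHt k).
    + exact y0.
    + apply (IHu k).
    + apply (IHr (S k)).
    + unfold env_ins. simpl. exact p.
    + intro z. unfold env_ins, env_tail, env_union.
      assert (e1 := e z). assert (e2 := e (pred z)). unfold env_tail, env_union in *.
      destruct (Nat.ltb_spec z k); destruct (Nat.eqb_spec z k);
      destruct (Nat.ltb_spec (S z) (S k)); destruct (Nat.eqb_spec (S z) (S k));
      try (rewrite e1); try (rewrite e2); try apply Permutation_refl; try lia.
      all: replace (S (pred z)) with z by lia; apply Permutation_refl.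
  - intros G t s n d IH k. apply dm_one. apply IH.
  - intros G G1 D t s M n m d IH d0 IH0 e k. eapply dm_cons.
    + apply IH.
    + apply IH0.
    + intro z. unfold env_ins, env_union.
      assert (e1 := e z). assert (e2 := e (pred z)). unfold env_union in *.
      destruct (z <? k); [exact e1|]. destruct (z =? k); [apply Permutation_refl|exact e2].
Qed.

Definition chR {A} (P : list A -> mset -> Prop) (k : list A) (M : mset) : Prop :=
  match k with [] => exists tau, M = [tau] | a :: k' => P (a :: k') M end.

Definition Pt (l : list (mset * ty)) (M : mset) : Prop :=
  M = map (fun p => TArr (fst p) (snd p)) l.
Definition Pu (U : mset) (M : mset) : Prop := Permutation M U.

Lemma chRt l Mt :
  (match l with
   | [] => exists tau, Mt = [tau]
   | _ => Mt = map (fun p => TArr (fst p) (snd p)) l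
   end) <-> chR Pt l Mt.
Proof. destruct l; simpl; tauto. Qed.

Lemma chRu (U : mset) Mu :
  (match U with
   | [] => exists tau, Mu = [tau]
   | a :: k => Permutation Mu (a :: k)
   end) <-> chR Pu U Mu.
Proof. destruct U; simpl; tauto. Qed.

Lemma merge2 {A} (P : list A -> mset -> Prop)
  (Papp : forall k1 k2 M1 M2, P k1 M1 -> P k2 M2 -> P (k1 ++ k2) (M1 ++ M2))
  t k1 M1 G1 n1 k2 M2 G2 n2 :
  chR P k1 M1 -> derm G1 t M1 n1 -> chR P k2 M2 -> derm G2 t M2 n2 ->
  exists G M n, chR P (k1 ++ k2) M /\ derm G t M n /\
    env_sub G (env_union G1 G2) /\ n <= n1 + n2.
Proof.
  intros H1 D1 H2 D2.
  destruct k1 as [|a k1]; destruct k2 as [|b k2].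
  - exists G1, M1, n1. repeat match goal with |- _ /\ _ => split end; auto; try lia.
    intro z; apply msub_appr.
  - exists G2, M2, n2. repeat match goal with |- _ /\ _ => split end; auto; try lia.
    intro z; apply msub_appl.
  - exists G1, M1, n1. rewrite app_nil_r. repeat match goal with |- _ /\ _ => split end; auto; try lia.
    intro z; apply msub_appr.
  - exists (env_union G1 G2), (M1 ++ M2), (n1 + n2).
    repeat match goal with |- _ /\ _ => split end; auto.
    + exact (Papp (a :: k1) (b :: k2) M1 M2 H1 H2).
    + apply derm_app; auto.
    + intro z; apply msub_refl.
Qed.

Lemma Pt_app : forall k1 k2 M1 M2, Pt k1 M1 -> Pt k2 M2 -> Pt (k1 ++ k2) (M1 ++ M2).
Proof. unfold Pt; intros; subst; rewrite map_app; reflexivity. Qed.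

Lemma Pu_app : forall k1 k2 M1 M2, Pu k1 M1 -> Pu k2 M2 -> Pu (k1 ++ k2) (M1 ++ M2).
Proof. unfold Pu; intros; apply Permutation_app; auto. Qed.

Lemma key : forall Gt T Mt a, derm Gt T Mt a -> forall t u r, T = JApp t u r ->
  exists ls Mt' Gt' nt Mu' Gu' nu Er nr A,
    chR Pt ls Mt' /\ derm Gt' t Mt' nt /\
    chR Pu (concat (map fst ls)) Mu' /\ derm Gu' u Mu' nu /\
    derm Er r Mt nr /\ Permutation (Er 0) (map snd ls) /\
    env_sub (env_union Gt' Gu') A /\ env_eq Gt (env_union A (env_tail Er)) /\
    S (nt + nu + nr) <= a.
Proof.
  intros Gt T Mt a H. induction H; intros t0 u0 r0 HT; subst.
  - inversion H as [| | G0 Gt0 Du0 E0 t1 u1 r1 s0 l Mt0 Mu0 m1 m2 m3 Hl Ht Hmu Hu Hr HE HG];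
      subst.
    exists l, Mt0, Gt0, m1, Mu0, Du0, m2, E0, m3, (env_union Gt0 Du0).
    repeat match goal with |- _ /\ _ => split end; auto.
    all: try exact (proj1 (chRu _ _) Hmu); try exact (proj1 (chRt _ _) Hl).
    + apply dm_one; auto.
    + intro z; apply msub_refl.
    + intro z. rewrite (HG z). unfold env_union. rewrite app_assoc. apply Permutation_refl.
  - specialize (IHderm t0 u0 r0 eq_refl).
    destruct IHderm as (ls & Mt' & Gt' & nt & Mu' & Gu' & nu & Er & nr & A &
      Hlt & Dt & Hlu & Du & Dr & HEr & HA & HDA & Hsz).
    inversion H as [| | G0 Gt0 Du0 E0 t1 u1 r1 s0 l Mt0 Mu0 m1 m2 m3 Hl Ht Hmu Hu Hr HE HG];
      subst.
    apply (proj1 (chRt _ _)) in Hl. apply (proj1 (chRu _ _)) in Hmu.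
    destruct (merge2 Pt Pt_app t0 _ _ _ _ _ _ _ _ Hl Ht Hlt Dt)
      as (Gt2 & Mt2 & nt2 & Ht2 & Dt2 & Hst & Hnt).
    destruct (merge2 Pu Pu_app u0 _ _ _ _ _ _ _ _ Hmu Hu Hlu Du)
      as (Gu2 & Mu2 & nu2 & Hu2 & Du2 & Hsu & Hnu).
    exists (l ++ ls), Mt2, Gt2, nt2, Mu2, Gu2, nu2, (env_union E0 Er), (m3 + nr),
      (env_union (env_union Gt0 Du0) A).
    repeat match goal with |- _ /\ _ => split end; auto.
    + rewrite map_app, concat_app. exact Hu2.
    + eapply dm_cons; eauto. apply env_eq_refl.
    + unfold env_union. rewrite map_app. apply Permutation_app; auto.
    + intro z. unfold env_union.
      eapply msub_trans. { apply msub_app; [apply Hst|apply Hsu]. }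
      unfold env_union.
      eapply msub_trans. { apply msub_of_perm. apply perm_mid. }
      apply msub_app; [apply msub_refl|]. apply HA.
    + intro z. rewrite (H1 z). unfold env_union, env_tail.
      rewrite (HG z), (HDA z). unfold env_union, env_tail.
      rewrite !app_assoc. apply Permutation_app_tail.
      rewrite <- !app_assoc. apply Permutation_app_head.
      apply Permutation_app_head. apply Permutation_app_comm.
    + lia.
Qed.

Theorem mainTheorem14 (G : env) (t u r u' r' : term) (s : ty) (n1 : nat) :
  der G (JApp (JApp t u r) u' r') s n1 ->
  exists (Sg : env) (n2 : nat),
    env_sub Sg G /\ n2 <= n1 /\
    der Sg (JApp t u (JApp r (lift 0 u') (lift 1 r'))) s n2.
Proof.
  intros H.
  inversion H as [| | G0 Gt Du E t1 u1 r1 s0 l Mt Mu a b c Hl Ht Hmu Hu Hr HE HG];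
    subst.
  destruct (key _ _ _ _ Ht t u r eq_refl)
    as (ls & Mt' & Gt' & nt & Mu' & Gu' & nu & Er & nr & A &
      Hlt & Dt & Hlu & Du' & Dr & HEr & HA & HDA & Hsz).
  destruct lift_der_all as [LD LDm].
  set (Es := env_union Er (env_union (env_ins 0 Du) (env_tail (env_ins 1 E)))).
  exists (env_union Gt' (env_union Gu' (env_tail Es))),
    (S (nt + nu + S (nr + b + c))).
  repeat match goal with |- _ /\ _ => split end.
  - intro z. unfold Es, env_union, env_tail, env_ins. simpl.
    replace (z - 0) with z by lia.
    eapply msub_perm; [apply Permutation_refl| |].
    2:{ rewrite app_assoc. apply msub_app; [apply HA| apply msub_refl]. }
    rewrite (HG z). unfold env_union, env_tail.
    rewrite (HDA z). unfold env_union, env_tail.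
    rewrite <- !app_assoc. apply Permutation_refl.
  - lia.
  - eapply d_app.
    + apply (proj2 (chRt _ _)). exact Hlt.
    + exact Dt.
    + apply (proj2 (chRu _ _)). exact Hlu.
    + exact Du'.
    + eapply d_app.
      * exact Hl.
      * exact Dr.
      * exact Hmu.
      * apply LDm. exact Hu.
      * apply LD. exact Hr.
      * unfold env_ins. simpl. exact HE.
      * apply env_eq_refl.
    + unfold Es, env_union, env_ins, env_tail. simpl.
      rewrite !app_nil_r. exact HEr.
    + apply env_eq_refl.
Qed.
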